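(* Let $n,m\ge 3$ and let $G=P_n\square P_m$ be the grid graph. A set $M$ of three vertices of $G$ is a $3$-minimal if and only if all of the following hold: (i) $M$ contains at most one corner vertex; (ii) $M$ contains two boundary vertices lying on opposite sides of the grid; (iii) either $M$ consists of two vertices $(i,j)$ and $(k,j)$ on the same line with $i\neq k$ together with a third vertex $(p,q)$ with $i\le p\le k$ and $q\neq j$, or $M$ consists of two vertices $(i,j)$ and $(i,k)$ on the same line with $j\neq k$ together with a third vertex $(p,q)$ with $j\le q\le k$ and $p\neq i$.
   Context: The grid graph $P_n\square P_m$ has vertex set $\{(i,j):0\le i\le n-1,\ 0\le j\le m-1\}$, with $(i,j)$ adjacent to $(k,l)$ iff $|i-k|+|j-l|=1$; the distance is $d((i,j),(k,l))=|i-k|+|j-l|$. The first coordinate is called the horizontal coordinate and the second the vertical coordinate. A vertex $w$ resolves two vertices $u,v$ if $d(w,u)\ne d(w,v)$. A set $R$ of vertices is resolving if every pair of distinct vertices is resolved by some vertex of $R$. A minimal is a resolving set $R$ such that no $R\setminus\{v\}$, $v\in R$, is resolving; a $k$-minimal is a minimal of cardinality $k$. Corner vertices are those of degree 2, side vertices those of degree 3, interior vertices those of degree 4; boundary vertices are corner or side vertices. A horizontal line is the set of all vertices with a fixed vertical coordinate, a vertical line the set of all vertices with a fixed horizontal coordinate; two vertices are on the same line if they share a coordinate. The sides of the grid are the four lines with first coordinate $0$, first coordinate $n-1$, second coordinate $0$, second coordinate $m-1$; two sides are opposite if they share no vertex (i.e. first coordinate $0$ and $n-1$, or second coordinate $0$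 and $m-1$). ''Two boundary vertices on opposite sides'' means one lies on a side and the other on the opposite side. *)

(* Defs.v *)
From mathcomp Require Import all_boot all_order.
Set Implicit Arguments. Unset Strict Implicit. Unset Printing Implicit Defensive.

Section Grid.
Variables n m : nat.
Definition vertex := ('I_n * 'I_m)%type.

Definition absdiff (a b : nat) : nat := (a - b) + (b - a).

Definition gdist (u v : vertex) : nat :=
  absdiff u.1 v.1 + absdiff u.2 v.2.

Definition gadj (u v : vertex) : bool := gdist u v == 1.

Definition gdeg (u : vertex) : nat := #|[set v : vertex | gadj u v]|.

Definition corner (u : vertex) : bool := gdeg u == 2.
Definition side_vertex (u : vertex) : bool := gdeg u == 3.
Definition boundary (u : vertex) : bool := corner u || side_vertex u.

Definition resolves (w u v : vertex) : bool := gdist w u != gdist w v.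

Definition resolving (R : {set vertex}) : Prop :=
  forall u v : vertex, u <> v -> exists2 w, w \in R & resolves w u v.

Definition minimal (R : {set vertex}) : Prop :=
  resolving R /\ forall v, v \in R -> ~ resolving (R :\ v).

Definition k_minimal (k : nat) (R : {set vertex}) : Prop :=
  minimal R /\ #|R| = k.

Definition opposite_boundary (u v : vertex) : Prop :=
  boundary u /\ boundary v /\
  (((nat_of_ord u.1 = 0) /\ (nat_of_ord v.1 = n.-1)) \/
   ((nat_of_ord u.2 = 0) /\ (nat_of_ord v.2 = m.-1))).

Definition cond_i (M : {set vertex}) : Prop :=
  #|[set x in M | corner x]| <= 1.

Definition cond_ii (M : {set vertex}) : Prop :=
  exists u v, [/\ u \in M, v \in M & opposite_boundary u v].

Definition cond_iii (M : {set vertex}) : Prop :=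
  (exists (i k p : 'I_n) (j q : 'I_m),
      [/\ i != k, M = [set (i, j); (k, j); (p, q)],
          i <= p <= k & q != j]) \/
  (exists (i p : 'I_n) (j k q : 'I_m),
      [/\ j != k, M = [set (i, j); (i, k); (p, q)],
          j <= q <= k & p != i]).
End Grid.

(* Main.v *)
Require Import Defs.
From mathcomp Require Import all_boot all_order zify.

Definition agD s r (x y : nat) := (s < x /\ r < y) \/ (x <= s /\ y <= r).
Definition agE s r (x y : nat) := (s < x /\ y <= r) \/ (x <= s /\ r < y).
Definition corner' (n m x y : nat) := (x = 0 \/ x = n.-1) /\ (y = 0 \/ y = m.-1).

Lemma absdiffP a b : exists d, absdiff a b = d /\ ((b = a + d) \/ (a = b + d)).
Proof. exists (absdiff a b); split => //; rewrite /absdiff; lia. Qed.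

Lemma core_ii n m a1 a2 b1 b2 c1 c2 : 3 <= n -> 3 <= m ->
  a1 < n -> a2 < m -> b1 < n -> b2 < m -> c1 < n -> c2 < m ->
  (forall s r, s.+1 < n -> r.+1 < m -> ~ (agD s r a1 a2 /\ agD s r b1 b2 /\ agD s r c1 c2)) ->
  (forall s r, s.+1 < n -> r.+1 < m -> ~ (agE s r a1 a2 /\ agE s r b1 b2 /\ agE s r c1 c2)) ->
  ((a1 = 0 \/ b1 = 0 \/ c1 = 0) /\ (a1 = n.-1 \/ b1 = n.-1 \/ c1 = n.-1)) \/
  ((a2 = 0 \/ b2 = 0 \/ c2 = 0) /\ (a2 = m.-1 \/ b2 = m.-1 \/ c2 = m.-1)).
Proof.
move=> Hn Hm ha1 ha2 hb1 hb2 hc1 hc2 ND NE.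
have X0 : (a1 = 0 \/ b1 = 0 \/ c1 = 0) \/ (0 < a1 /\ 0 < b1 /\ 0 < c1) by lia.
have XN : (a1 = n.-1 \/ b1 = n.-1 \/ c1 = n.-1) \/ (a1 <= n.-2 /\ b1 <= n.-2 /\ c1 <= n.-2) by lia.
have Y0 : (a2 = 0 \/ b2 = 0 \/ c2 = 0) \/ (0 < a2 /\ 0 < b2 /\ 0 < c2) by lia.
have YN : (a2 = m.-1 \/ b2 = m.-1 \/ c2 = m.-1) \/ (a2 <= m.-2 /\ b2 <= m.-2 /\ c2 <= m.-2) by lia.
case: X0 => X0; case: XN => XN; first by left.
- case: Y0 => Y0; case: YN => YN; first by right.
  + exfalso; apply: (ND n.-2 m.-2); [lia|lia|]. rewrite /agD; split; [right|split; right]; lia.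
  + exfalso; apply: (NE n.-2 0); [lia|lia|]. rewrite /agE; split; [right|split; right]; lia.
  + exfalso; apply: (ND n.-2 m.-2); [lia|lia|]. rewrite /agD; split; [right|split; right]; lia.
- case: Y0 => Y0; case: YN => YN; first by right.
  + exfalso; apply: (NE 0 m.-2); [lia|lia|]. rewrite /agE; split; [left|split; left]; lia.
  + exfalso; apply: (ND 0 0); [lia|lia|]. rewrite /agD; split; [left|split; left]; lia.
  + exfalso; apply: (ND 0 0); [lia|lia|]. rewrite /agD; split; [left|split; left]; lia.
- case: Y0 => Y0; case: YN => YN; first by right.
  + exfalso; apply: (ND n.-2 m.-2); [lia|lia|]. rewrite /agD; split; [right|split; right]; lia.
  + exfalso; apply: (ND 0 0); [lia|lia|]. rewrite /agD; split; [left|split; left]; lia.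
  + exfalso; apply: (ND 0 0); [lia|lia|]. rewrite /agD; split; [left|split; left]; lia.
Qed.

Lemma core_sorted n m x1 y1 x2 y2 x3 y3 : 3 <= n -> 3 <= m ->
  x1 < n -> y1 < m -> x2 < n -> y2 < m -> x3 < n -> y3 < m ->
  x1 <= x2 <= x3 ->
  (x1,y1) <> (x2,y2) -> (x1,y1) <> (x3,y3) -> (x2,y2) <> (x3,y3) ->
  ~ (corner' n m x1 y1 /\ corner' n m x2 y2) -> ~ (corner' n m x1 y1 /\ corner' n m x3 y3) -> ~ (corner' n m x2 y2 /\ corner' n m x3 y3) ->
  (forall s r, s.+1 < n -> r.+1 < m -> ~ (agD s r x1 y1 /\ agD s r x2 y2 /\ agD s r x3 y3)) ->
  (forall s r, s.+1 < n -> r.+1 < m -> ~ (agE s r x1 y1 /\ agE s r x2 y2 /\ agE s r x3 y3)) ->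
  (forall t, 0 < t -> t.+1 < n -> ~ (x1 = t /\ x2 = t /\ x3 = t)) ->
  (forall t, 0 < t -> t.+1 < m -> ~ (y1 = t /\ y2 = t /\ y3 = t)) ->
  ((x1 = 0 \/ x2 = 0 \/ x3 = 0) /\ (x1 = n.-1 \/ x2 = n.-1 \/ x3 = n.-1)) \/
  ((y1 = 0 \/ y2 = 0 \/ y3 = 0) /\ (y1 = m.-1 \/ y2 = m.-1 \/ y3 = m.-1)) ->
  (y1 = y3 /\ x1 < x3 /\ y2 <> y1) \/
  (x1 = x2 /\ x2 < x3 /\ ((y1 < y2 /\ y1 <= y3 <= y2) \/ (y2 < y1 /\ y2 <= y3 <= y1))) \/
  (x2 = x3 /\ x1 < x2 /\ ((y2 < y3 /\ y2 <= y1 <= y3) \/ (y3 < y2 /\ y3 <= y1 <= y2))).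
Proof.
move=> Hn Hm h1 h2 h3 h4 h5 h6 /andP[s12 s23] d12 d13 d23 c12 c13 c23 ND NE CX CY ii.
move: c12 c13 c23 ii; rewrite /corner'.
have L : x1 < x2 -> x1 < x3 -> ~ (y1 < y2 /\ y1 < y3) /\ ~ (y2 < y1 /\ y3 < y1).
  move=> l2 l3; split.
  - case=> u v; apply: (ND x1 y1); [lia|lia|]. rewrite /agD; split; [right|split; left]; lia.
  - case=> u v; apply: (NE x1 y1.-1); [lia|lia|]. rewrite /agE; split; [right|split; left]; lia.
have R : x1 < x3 -> x2 < x3 -> ~ (y1 < y3 /\ y2 < y3) /\ ~ (y3 < y1 /\ y3 < y2).
  move=> l2 l3; split.
  - case=> u v; apply: (ND x3.-1 y3.-1); [lia|lia|]. rewrite /agD; split; [right|split; [right|left]]; lia.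
  - case=> u v; apply: (NE x3.-1 y3); [lia|lia|]. rewrite /agE; split; [right|split; [right|left]]; lia.
have [e12|l12] : x1 = x2 \/ x1 < x2 by clear L R; lia.
  have [e23|l23] : x2 = x3 \/ x2 < x3 by clear L R; lia.
  - have hx : x1 = 0 \/ x1 = n.-1.
      clear L R.
      have [H|H] : x1 = 0 \/ 0 < x1 by lia. by left.
      have [H'|H'] : x1 = n.-1 \/ x1.+1 < n by lia. by right.
      exfalso; apply: (CX x1 H H'); lia.
    have ne12 : y1 <> y2 by move=> E; apply: d12; congr pair.
    have ne13 : y1 <> y3 by move=> E; apply: d13; congr pair; clear L R; lia.
    have ne23 : y2 <> y3 by move=> E; apply: d23; congr pair; clear L R; lia.
    clear L R ND NE CX CY d12 d13 d23.
    move=> c12 c13 c23 ii; exfalso.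
    case: ii => [[A B]|[A B]]; first by clear c12 c13 c23; lia.
    case: A => [A|[A|A]]; case: B => [B|[B|B]];
      first [ (clear c12 c13 c23; lia) | (apply: c12; clear c13 c23; lia) | (apply: c13; clear c12 c23; lia) | (apply: c23; clear c12 c13; lia) ].
  - move=> _ _ _ _; right; left. have ne12 : y1 <> y2 by move=> E; apply: d12; congr pair.
    have l13 : x1 < x3 by clear L R; lia.
    case: (R l13 l23) => r1 r2. clear L R ND NE CX CY. lia.
have [e23|l23] : x2 = x3 \/ x2 < x3 by clear L R; lia.
- move=> _ _ _ _; right; right. have ne23 : y2 <> y3 by move=> E; apply: d23; congr pair.
  have l13 : x1 < x3 by clear L R; lia.
  case: (L l12 l13) => r1 r2. clear L R ND NE CX CY. lia.
- have l13 : x1 < x3 by clear L R; lia.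
  case: (L l12 l13) => r1 r2. case: (R l13 l23) => r3 r4.
  have e13 : y1 = y3 by clear L R ND NE CX CY; lia.
  have [e12|ne12] : y1 = y2 \/ y1 <> y2 by clear L R; lia.
  + have hy : y1 = 0 \/ y1 = m.-1.
      clear L R.
      have [H|H] : y1 = 0 \/ 0 < y1 by lia. by left.
      have [H'|H'] : y1 = m.-1 \/ y1.+1 < m by lia. by right.
      exfalso; apply: (CY y1 H H'); lia.
    clear L R ND NE CX CY d12 d13 d23.
    move=> c12 c13 c23 ii; exfalso.
    case: ii => [[A B]|[A B]]; last by clear c12 c13 c23; lia.
    have a0 : x1 = 0 by clear c12 c13 c23; lia. have b0 : x3 = n.-1 by clear c12 c13 c23; lia.
    apply: c13; clear c12 c23; lia.
  + move=> _ _ _ _; left; clear L R; lia.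
Qed.


Lemma core_pair n m x1 y1 x2 y2 : 3 <= n -> 3 <= m ->
  x1 < n -> y1 < m -> x2 < n -> y2 < m ->
  (x1,y1) <> (x2,y2) ->
  (forall s r, s.+1 < n -> r.+1 < m -> ~ (agD s r x1 y1 /\ agD s r x2 y2)) ->
  (forall s r, s.+1 < n -> r.+1 < m -> ~ (agE s r x1 y1 /\ agE s r x2 y2)) ->
  (forall t, 0 < t -> t.+1 < n -> ~ (x1 = t /\ x2 = t)) ->
  (forall t, 0 < t -> t.+1 < m -> ~ (y1 = t /\ y2 = t)) ->
  corner' n m x1 y1 /\ corner' n m x2 y2.
Proof.
move=> Hn Hm h1 h2 h3 h4 d12 ND NE CX CY.
have ii := @core_ii n m _ _ _ _ _ _ Hn Hm h1 h2 h3 h4 h3 h4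
  (fun s r hs hr H => ND s r hs hr (conj H.1 H.2.1))
  (fun s r hs hr H => NE s r hs hr (conj H.1 H.2.1)).
rewrite /corner'.
have [e12|[l12|l12]] : x1 = x2 \/ x1 < x2 \/ x2 < x1 by lia.
- have ne : y1 <> y2 by move=> E; apply: d12; congr pair.
  have hx : x1 = 0 \/ x1 = n.-1.
    have [H|H] : x1 = 0 \/ 0 < x1 by lia. by left.
    have [H'|H'] : x1 = n.-1 \/ x1.+1 < n by lia. by right.
    exfalso; apply: (CX x1 H H'); lia.
  clear ND NE CX CY d12. lia.
- have r1 : ~ (y1 < y2).
    move=> u; apply: (ND x1 y1); [lia|lia|]. rewrite /agD; split; [right|left]; lia.
  have r2 : ~ (y2 < y1).
    move=> u; apply: (NE x1 y1.-1); [lia|lia|]. rewrite /agE; split; [right|left]; lia.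
  have hy : y1 = 0 \/ y1 = m.-1.
    have [H|H] : y1 = 0 \/ 0 < y1 by lia. by left.
    have [H'|H'] : y1 = m.-1 \/ y1.+1 < m by lia. by right.
    exfalso; apply: (CY y1 H H'); lia.
  clear ND NE CX CY d12. lia.
- have r1 : ~ (y2 < y1).
    move=> u; apply: (ND x2 y2); [lia|lia|]. rewrite /agD; split; [left|right]; lia.
  have r2 : ~ (y1 < y2).
    move=> u; apply: (NE x2 y2.-1); [lia|lia|]. rewrite /agE; split; [left|right]; lia.
  have hy : y1 = 0 \/ y1 = m.-1.
    have [H|H] : y1 = 0 \/ 0 < y1 by lia. by left.
    have [H'|H'] : y1 = m.-1 \/ y1.+1 < m by lia. by right.
    exfalso; apply: (CY y1 H H'); lia.
  clear ND NE CX CY d12. lia.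
Qed.

Lemma Qnat n m i j k p q x1 y1 x2 y2 : 3 <= n -> 3 <= m ->
  x1 < n -> x2 < n -> y1 < m -> y2 < m -> i < k -> i <= p <= k -> k < n -> q < m -> j < m -> q <> j ->
  (i = 0 /\ k = n.-1) \/ (j = 0 /\ q = m.-1) \/ (j = m.-1 /\ q = 0) ->
  absdiff i x1 + absdiff j y1 = absdiff i x2 + absdiff j y2 ->
  absdiff k x1 + absdiff j y1 = absdiff k x2 + absdiff j y2 ->
  absdiff p x1 + absdiff q y1 = absdiff p x2 + absdiff q y2 ->
  x1 = x2 /\ y1 = y2.
Proof.
move=> Hn Hm h1 h2 h3 h4 ik ipk hk hq hj qj SC.
case: (absdiffP i x1) => [A1 [-> HA1]]; case: (absdiffP i x2) => [A2 [-> HA2]].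
case: (absdiffP k x1) => [B1 [-> HB1]]; case: (absdiffP k x2) => [B2 [-> HB2]].
case: (absdiffP p x1) => [C1 [-> HC1]]; case: (absdiffP p x2) => [C2 [-> HC2]].
case: (absdiffP j y1) => [D1 [-> HD1]]; case: (absdiffP j y2) => [D2 [-> HD2]].
case: (absdiffP q y1) => [E1 [-> HE1]]; case: (absdiffP q y2) => [E2 [-> HE2]].
move=> e1 e2 e3.
have X : x1 = x2 \/ (x1 <= i /\ x2 <= i) \/ (k <= x1 /\ k <= x2).
  clear SC e3 HC1 HC2 HD1 HD2 HE1 HE2; lia.
have B : x1 = x2 -> x1 = x2 /\ y1 = y2.
  move=> E; subst x2; split => //; clear SC X e2 HB1 HB2; lia.
case: X => [/B//|[[l1 l2]|[l1 l2]]]; apply: B.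
- case: SC => [[i0 _]|[[j0 q0]|[j0 q0]]]; first by clear -i0 l1 l2; lia.
  + subst j q; clear e2 HB1 HB2; lia.
  + subst j q; clear e2 HB1 HB2; lia.
- case: SC => [[_ k0]|[[j0 q0]|[j0 q0]]]; first by clear -k0 l1 l2 h1 h2 Hn; lia.
  + subst j q; clear e1 HA1 HA2; lia.
  + subst j q; clear e1 HA1 HA2; lia.
Qed.


Lemma card_line n m (P : vertex n m -> bool) (c : bool) :
  (c -> exists w, forall v, P v = (v == w)) -> (~~ c -> forall v, ~~ P v) ->
  \sum_(v : vertex n m) (P v : nat) = c.
Proof.
case: c => [/(_ isT) [w Hw] _ | _ /(_ isT) H].
- rewrite (bigD1 w) //= Hw eqxx big1 // => v; rewrite Hw => /negbTE ->.
  by [].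
- by rewrite big1 // => v _; rewrite (negbTE (H v)).
Qed.

Lemma adj_pt (a b x y : nat) :
  ((absdiff x a + absdiff y b) == 1 : nat) =
  ((x.+1 == a) && (y == b)) + ((a.+1 == x) && (y == b)) +
  ((y.+1 == b) && (x == a)) + ((b.+1 == y) && (x == a)) :> nat.
Proof.
rewrite /absdiff.
do ! (case: eqP => ? /=); lia.
Qed.

Lemma veqE n m (v w : vertex n m) :
  (v == w) = ((v.1 == w.1 :> nat) && (v.2 == w.2 :> nat)).
Proof. by case: v w => [a b] [c d]. Qed.

Lemma gdeg_formula n m (u : vertex n m) :
  gdeg u = (u.1.+1 < n) + (0 < u.1) + (u.2.+1 < m) + (0 < u.2).
Proof.
rewrite /gdeg -sum1_card big_mkcond /=.
rewrite (eq_bigr (fun v : vertex n m =>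
   ((((u.1).+1 == v.1 :> nat) && (u.2 == v.2 :> nat)) : nat) +
   (((v.1).+1 == u.1 :> nat) && (u.2 == v.2 :> nat)) +
   (((u.2).+1 == v.2 :> nat) && (u.1 == v.1 :> nat)) +
   (((v.2).+1 == u.2 :> nat) && (u.1 == v.1 :> nat)))); last first.
  move=> v _; rewrite !inE /gadj /gdist -adj_pt.
  by case: eqP.
rewrite !big_split /=.
case: u => [[a ha] [b hb]] /=.
congr (_ + _ + _ + _); apply: card_line.
- move=> h.
  exists (Ordinal h, Ordinal hb) => v; rewrite veqE /=.
  apply/idP/idP => /andP[/eqP e1 /eqP e2]; apply/andP; split; apply/eqP; lia.
- by move=> h [x y] /=; apply/negP => /andP[/eqP e1 _]; have := ltn_ord x; lia.
- move=> h. have h' : a.-1 < n by lia.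
  exists (Ordinal h', Ordinal hb) => v; rewrite veqE /=.
  apply/idP/idP => /andP[/eqP e1 /eqP e2]; apply/andP; split; apply/eqP; lia.
- by move=> h v; apply/negP => /andP[/eqP e1 _]; lia.
- move=> h.
  exists (Ordinal ha, Ordinal h) => v; rewrite veqE /=.
  apply/idP/idP => /andP[/eqP e1 /eqP e2]; apply/andP; split; apply/eqP; lia.
- by move=> h [x y] /=; apply/negP => /andP[/eqP e1 _]; have := ltn_ord y; lia.
- move=> h. have h' : b.-1 < m by lia.
  exists (Ordinal ha, Ordinal h') => v; rewrite veqE /=.
  apply/idP/idP => /andP[/eqP e1 /eqP e2]; apply/andP; split; apply/eqP; lia.
- by move=> h v; apply/negP => /andP[/eqP e1 _]; lia.
Qed.

Lemma corner_iff n m (u : vertex n m) : 3 <= n -> 3 <= m ->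
  corner u <-> corner' n m u.1 u.2.
Proof.
move=> Hn Hm; rewrite /corner gdeg_formula /corner'.
have := ltn_ord u.1; have := ltn_ord u.2.
case: (u.1 : nat) => [|x]; case: (u.2 : nat) => [|y] /= h2 h1.
all: split; [move/eqP | move=> H; apply/eqP].
all: try (case: ltnP => ? /=); try (case: ltnP => ? /=); lia.
Qed.

Lemma boundary_iff n m (u : vertex n m) : 3 <= n -> 3 <= m ->
  boundary u <-> (u.1 = 0 :> nat \/ u.1 = n.-1 :> nat \/ u.2 = 0 :> nat \/ u.2 = m.-1 :> nat).
Proof.
move=> Hn Hm; rewrite /boundary /corner /side_vertex gdeg_formula.
have := ltn_ord u.1; have := ltn_ord u.2.
case: (u.1 : nat) => [|x]; case: (u.2 : nat) => [|y] /= h2 h1.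
all: split; [move/orP => [] /eqP | move=> H; apply/orP].
all: try (case: ltnP => ? /=); try (case: ltnP => ? /=); lia.
Qed.

Set Implicit Arguments. Unset Strict Implicit. Unset Printing Implicit Defensive.


Lemma not_res n m (R : {set vertex n m}) (p q : vertex n m) :
  p <> q -> (forall w, w \in R -> gdist w p = gdist w q) -> ~ resolving R.
Proof.
move=> pq H Hr; case: (Hr p q pq) => w wR; rewrite /resolves (H w wR).
by rewrite eqxx.
Qed.

Lemma res_agD n m (R : {set vertex n m}) s r : resolving R -> s.+1 < n -> r.+1 < m ->
  ~ (forall w, w \in R -> agD s r w.1 w.2).
Proof.
move=> Hr hs hr H.
have hs' : s < n by lia. have hr' : r < m by lia.
apply: (@not_res n m R (Ordinal hs', Ordinal hr) (Ordinal hs, Ordinal hr')) Hr.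
  by move/(congr1 (fun v : vertex n m => (v.1 : nat))) => /=; lia.
move=> w /H; rewrite /agD /gdist /absdiff /=; lia.
Qed.

Lemma res_agE n m (R : {set vertex n m}) s r : resolving R -> s.+1 < n -> r.+1 < m ->
  ~ (forall w, w \in R -> agE s r w.1 w.2).
Proof.
move=> Hr hs hr H.
have hs' : s < n by lia. have hr' : r < m by lia.
apply: (@not_res n m R (Ordinal hs', Ordinal hr') (Ordinal hs, Ordinal hr)) Hr.
  by move/(congr1 (fun v : vertex n m => (v.1 : nat))) => /=; lia.
move=> w /H; rewrite /agE /gdist /absdiff /=; lia.
Qed.

Lemma res_CX n m (R : {set vertex n m}) t : 3 <= m -> resolving R -> 0 < t -> t.+1 < n ->
  ~ (forall w, w \in R -> w.1 = t :> nat).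
Proof.
move=> Hm Hr h0 ht H.
have h1 : t.-1 < n by lia. have h0m : 0 < m by lia.
apply: (@not_res n m R (Ordinal h1, Ordinal h0m) (Ordinal ht, Ordinal h0m)) Hr.
  by move/(congr1 (fun v : vertex n m => (v.1 : nat))) => /=; lia.
move=> w /H; rewrite /gdist /absdiff /=; lia.
Qed.

Lemma res_CY n m (R : {set vertex n m}) t : 3 <= n -> resolving R -> 0 < t -> t.+1 < m ->
  ~ (forall w, w \in R -> w.2 = t :> nat).
Proof.
move=> Hn Hr h0 ht H.
have h1 : t.-1 < m by lia. have h0n : 0 < n by lia.
apply: (@not_res n m R (Ordinal h0n, Ordinal h1) (Ordinal h0n, Ordinal ht)) Hr.
  by move/(congr1 (fun v : vertex n m => (v.2 : nat))) => /=; lia.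
move=> w /H; rewrite /gdist /absdiff /=; lia.
Qed.

Lemma in3 (T : finType) (a b c w : T) : w \in [set a; b; c] -> [\/ w = a, w = b | w = c].
Proof. by rewrite !inE -orbA => /orP[/eqP->|/orP[/eqP->|/eqP->]]; [constructor 1|constructor 2|constructor 3]. Qed.

Lemma in2 (T : finType) (a b w : T) : w \in [set a; b] -> w = a \/ w = b.
Proof. by rewrite !inE => /orP [/eqP->|/eqP->]; [left|right]. Qed.

Lemma resolving_mono n m (S T : {set vertex n m}) : S \subset T -> resolving S -> resolving T.
Proof.
move=> ST Hr u v uv; case: (Hr u v uv) => w wS res; exists w => //.
exact: (subsetP ST).
Qed.

Lemma vpair_neq n m (a b : vertex n m) : a != b -> (a.1 : nat, a.2 : nat) <> (b.1 : nat, b.2 : nat).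
Proof.
move=> ab [e1 e2]; move/negP: ab; apply; rewrite veqE; apply/andP; split; apply/eqP; done.
Qed.

Lemma pair_res_corner n m (a b : vertex n m) : 3 <= n -> 3 <= m -> a != b ->
  resolving [set a; b] -> corner a /\ corner b.
Proof.
move=> Hn Hm ab Hr.
rewrite !corner_iff //.
apply: core_pair => //; try exact: ltn_ord.
- exact: vpair_neq.
- move=> s r hs hr [Ha Hb]; apply: (res_agD Hr hs hr) => w /in2 [->|->] //.
- move=> s r hs hr [Ha Hb]; apply: (res_agE Hr hs hr) => w /in2 [->|->] //.
- move=> t h0 ht [Ha Hb]; apply: (res_CX Hm Hr h0 ht) => w /in2 [->|->] //.
- move=> t h0 ht [Ha Hb]; apply: (res_CY Hn Hr h0 ht) => w /in2 [->|->] //.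
Qed.

Lemma absd0 u : absdiff 0 u = u.
Proof. by rewrite /absdiff; lia. Qed.

Lemma absdN n u : u < n -> absdiff n.-1 u = n.-1 - u.
Proof. by rewrite /absdiff; lia. Qed.

Lemma corner_pair_res n m (x y : vertex n m) : 3 <= n -> 3 <= m -> x != y ->
  corner x -> corner y -> (x.1 = y.1 :> nat \/ x.2 = y.2 :> nat) -> resolving [set x; y].
Proof.
move=> Hn Hm xy /corner_iff -/(_ Hn Hm) cx /corner_iff -/(_ Hn Hm) cy side u v uv.
case Ex: (gdist x u != gdist x v); first by exists x; rewrite ?inE ?eqxx.
case Ey: (gdist y u != gdist y v); first by exists y; rewrite ?inE ?eqxx ?orbT.
exfalso; apply: uv.
move/negbFE/eqP: Ex; move/negbFE/eqP: Ey.
have nxy := vpair_neq xy.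
case: x y u v cx cy side nxy {xy} => [x1 x2] [y1 y2] [u1 u2] [v1 v2] /=.
rewrite /corner' /gdist /= => cx cy side nxy ey ex.
have hu1 := ltn_ord u1; have hu2 := ltn_ord u2; have hv1 := ltn_ord v1; have hv2 := ltn_ord v2.
suff [e1 e2] : (u1 : nat) = v1 /\ (u2 : nat) = v2.
  by congr pair; apply: val_inj.
move: cx cy ex ey nxy side.
move: (x1 : nat) (x2 : nat) (y1 : nat) (y2 : nat) => a1 a2 b1 b2.
move=> [[->|->] [->|->]] [[->|->] [->|->]] ex ey nxy side;
  rewrite ?absd0 ?(absdN hu1) ?(absdN hu2) ?(absdN hv1) ?(absdN hv2) in ex ey *;
  clear -ex ey nxy side hu1 hu2 hv1 hv2 Hn Hm;
  first [ (exfalso; apply: nxy; congr pair; lia) | lia ].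
Qed.


Lemma diag_sum n m (x y u : vertex n m) : 3 <= n -> 3 <= m ->
  corner x -> corner y -> x.1 <> y.1 :> nat -> x.2 <> y.2 :> nat ->
  gdist x u + gdist y u = n.-1 + m.-1.
Proof.
move=> Hn Hm /corner_iff -/(_ Hn Hm) cx /corner_iff -/(_ Hn Hm) cy.
case: x y u cx cy => [x1 x2] [y1 y2] [u1 u2] /=; rewrite /corner' /gdist /=.
have hu1 := ltn_ord u1; have hu2 := ltn_ord u2.
move: (x1 : nat) (x2 : nat) (y1 : nat) (y2 : nat) => a1 a2 b1 b2.
move=> [[->|->] [->|->]] [[->|->] [->|->]] n1 n2;
  rewrite ?absd0 ?(absdN hu1) ?(absdN hu2); clear -n1 n2 hu1 hu2 Hn Hm; lia.
Qed.

Lemma dup_res n m (M : {set vertex n m}) (x y : vertex n m) K :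
  x \in M -> x != y -> (forall u, gdist x u + gdist y u = K) ->
  resolving M -> resolving (M :\ y).
Proof.
move=> xM xy HK Hr u v uv; case: (Hr u v uv) => w wM res.
case: (eqVneq w y) => [Ewy|nwy].
- exists x; first by rewrite !inE xM andbT; apply: contraNneq xy => ->.
  move: res; rewrite /resolves Ewy; apply: contra => /eqP E.
  have := HK u; have := HK v; rewrite E; lia.
- by exists w; rewrite // !inE nwy.
Qed.

Lemma card3E (T : finType) (A : {set T}) : #|A| = 3 ->
  exists a b c, [/\ a != b, a != c, b != c & A = [set a; b; c]].
Proof.
move=> HA.
have : 0 < #|A| by rewrite HA. case/card_gt0P => a aA.
have : #|A :\ a| == 2 by apply/eqP; move: HA; rewrite (cardsD1 a A) aA /=; lia.
case/cards2P => b [c [bc E]].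
have : b \in A :\ a by rewrite E !inE eqxx.
have : c \in A :\ a by rewrite E !inE eqxx orbT.
rewrite !inE => /andP[ca _] /andP[ba _].
exists a, b, c; split => //; try by rewrite eq_sym.
rewrite -[LHS](setD1K aA) E; apply/setP => z; by rewrite !inE orbA.
Qed.

Lemma cards_ge2 n m (M : {set vertex n m}) (x y : vertex n m) :
  x \in M -> y \in M -> x != y -> corner x -> corner y -> ~ cond_i M.
Proof.
move=> xM yM xy cx cy; rewrite /cond_i.
have : [set x; y] \subset [set z in M | corner z].
  by apply/subsetP => z /in2 [->|->]; rewrite inE ?xM ?yM ?cx ?cy.
move/subset_leq_card; rewrite cards2 xy => /= H1 H2.
by have := leq_trans H1 H2.
Qed.

Lemma pair_in n m (M : {set vertex n m}) v : #|M| = 3 -> v \in M ->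
  exists x y, [/\ x != y, x \in M, y \in M & M :\ v = [set x; y]].
Proof.
move=> HM vM.
have : #|M :\ v| == 2 by apply/eqP; move: HM; rewrite (cardsD1 v M) vM /=; lia.
case/cards2P => x [y [xy E]].
have : x \in M :\ v by rewrite E !inE eqxx.
have : y \in M :\ v by rewrite E !inE eqxx orbT.
rewrite !inE => /andP[_ yM] /andP[_ xM].
by exists x, y.
Qed.

Lemma third_in n m (M : {set vertex n m}) x y : #|M| = 3 -> x \in M -> y \in M -> x != y ->
  exists z, z \in M /\ [set x; y] \subset M :\ z.
Proof.
move=> HM xM yM xy.
have sub : [set x; y] \subset M by apply/subsetP => z /in2 [->|->].
have : 0 < #|M :\: [set x; y]|.
  rewrite cardsD (setIidPr sub) cards2 xy HM //.
case/card_gt0P => z; rewrite !inE negb_or => /andP[/andP[zx zy] zM].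
exists z; split => //; apply/subsetP => w /in2 [->|->]; rewrite !inE ?xM ?yM.
- by rewrite eq_sym zx.
- by rewrite eq_sym zy.
Qed.


Lemma ord_neq n (i k : 'I_n) : (i : nat) <> k -> i != k.
Proof. by move=> H; apply/eqP => E; apply: H; rewrite E. Qed.

Lemma ord_neq' n (i k : 'I_n) : i != k -> (i : nat) <> k.
Proof. by move=> H E; move/eqP: H; apply; apply: val_inj. Qed.

Lemma iii_res n m (M : {set vertex n m}) : 3 <= n -> 3 <= m ->
  cond_ii M -> cond_iii M -> resolving M.
Proof.
move=> Hn Hm [u [v [uM vM [_ [_ ob]]]]]
  [[i [k [p [j [q [ik EM ipk qj]]]]]] | [i [p [j [k [q [jk EM jqk pi]]]]]]]; subst M.
- have ik' := ord_neq' ik; have qj' := ord_neq' qj.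
  have hk := ltn_ord k; have hq := ltn_ord q; have hj := ltn_ord j.
  have SC : ((i : nat) = 0 /\ (k : nat) = n.-1) \/ ((j : nat) = 0 /\ (q : nat) = m.-1) \/
            ((j : nat) = m.-1 /\ (q : nat) = 0).
    move: ob; case/in3: uM => ->; case/in3: vM => -> /= ob; clear -ob ik' qj' ipk hk hq hj Hn Hm; lia.
  have key : forall x y : vertex n m, gdist (i, j) x = gdist (i, j) y ->
      gdist (k, j) x = gdist (k, j) y -> gdist (p, q) x = gdist (p, q) y -> x = y.
    move=> [x1 x2] [y1 y2]; rewrite /gdist /= => e1 e2 e3.
    have [E1 E2] := @Qnat n m i j k p q x1 x2 y1 y2 Hn Hm (ltn_ord x1) (ltn_ord y1) (ltn_ord x2) (ltn_ord y2)
      ltac:(lia) ipk hk hq hj qj' SC e1 e2 e3.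
    by congr pair; apply: val_inj.
  move=> x y xy.
  case E1: (gdist (i, j) x != gdist (i, j) y); first by exists (i, j); rewrite // !inE eqxx.
  case E2: (gdist (k, j) x != gdist (k, j) y); first by exists (k, j); rewrite // !inE eqxx ?orbT.
  case E3: (gdist (p, q) x != gdist (p, q) y); first by exists (p, q); rewrite // !inE eqxx ?orbT.
  by exfalso; apply: xy; apply: key; apply/eqP; rewrite -[_ == _]negbK ?E1 ?E2 ?E3.
- have jk' := ord_neq' jk; have pi' := ord_neq' pi.
  have hk := ltn_ord k; have hp := ltn_ord p; have hi := ltn_ord i.
  have SC : ((j : nat) = 0 /\ (k : nat) = m.-1) \/ ((i : nat) = 0 /\ (p : nat) = n.-1) \/
            ((i : nat) = n.-1 /\ (p : nat) = 0).
    move: ob; case/in3: uM => ->; case/in3: vM => -> /= ob; clear -ob jk' pi' jqk hk hp hi Hn Hm; lia.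
  have key : forall x y : vertex n m, gdist (i, j) x = gdist (i, j) y ->
      gdist (i, k) x = gdist (i, k) y -> gdist (p, q) x = gdist (p, q) y -> x = y.
    move=> [x1 x2] [y1 y2]; rewrite /gdist /= => e1 e2 e3.
    rewrite addnC [RHS]addnC in e1; rewrite addnC [RHS]addnC in e2; rewrite addnC [RHS]addnC in e3.
    have [E1 E2] := @Qnat m n j i k q p x2 x1 y2 y1 Hm Hn (ltn_ord x2) (ltn_ord y2) (ltn_ord x1) (ltn_ord y1)
      ltac:(lia) jqk hk hp hi pi' SC e1 e2 e3.
    by congr pair; apply: val_inj.
  move=> x y xy.
  case E1: (gdist (i, j) x != gdist (i, j) y); first by exists (i, j); rewrite // !inE eqxx.
  case E2: (gdist (i, k) x != gdist (i, k) y); first by exists (i, k); rewrite // !inE eqxx ?orbT.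
  case E3: (gdist (p, q) x != gdist (p, q) y); first by exists (p, q); rewrite // !inE eqxx ?orbT.
  by exfalso; apply: xy; apply: key; apply/eqP; rewrite -[_ == _]negbK ?E1 ?E2 ?E3.
Qed.


Lemma card3_neq (T : finType) (a b c : T) : #|[set a; b; c]| = 3 ->
  [/\ a != b, a != c & b != c].
Proof.
move=> H; split; apply/negP => /eqP E; subst.
- have : [set b; b; c] = [set b; c] by apply/setP => w; rewrite !inE orbb.
  by move=> E; move: H; rewrite E cards2; case: (_ != _).
- have : [set c; b; c] = [set c; b] by apply/setP => w; rewrite !inE orbAC orbb.
  by move=> E; move: H; rewrite E cards2; case: (_ != _).
- have : [set a; c; c] = [set a; c] by apply/setP => w; rewrite !inE -orbA orbb.
  by move=> E; move: H; rewrite E cards2; case: (_ != _).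
Qed.

Lemma mk_ii n m (M : {set vertex n m}) u v : 3 <= n -> 3 <= m -> u \in M -> v \in M ->
  ((u.1 = 0 :> nat /\ v.1 = n.-1 :> nat) \/ (u.2 = 0 :> nat /\ v.2 = m.-1 :> nat)) -> cond_ii M.
Proof.
move=> Hn Hm uM vM H; exists u, v; split => //.
rewrite /opposite_boundary; split; [|split] => //.
- apply/(@boundary_iff n m _ Hn Hm); move: H; case: u {uM} => [u1 u2]; case: v {vM} => [v1 v2] /=; lia.
- apply/(@boundary_iff n m _ Hn Hm); move: H; case: u {uM} => [u1 u2]; case: v {vM} => [v1 v2] /=; lia.
Qed.

Lemma in3a (T : finType) (a b c : T) : a \in [set a; b; c].
Proof. by rewrite !inE eqxx. Qed.
Lemma in3b (T : finType) (a b c : T) : b \in [set a; b; c].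
Proof. by rewrite !inE eqxx ?orbT. Qed.
Lemma in3c (T : finType) (a b c : T) : c \in [set a; b; c].
Proof. by rewrite !inE eqxx ?orbT. Qed.

Lemma ii_set3 n m (a b c : vertex n m) : 3 <= n -> 3 <= m ->
  ((a.1 = 0 :> nat \/ b.1 = 0 :> nat \/ c.1 = 0 :> nat) /\
   (a.1 = n.-1 :> nat \/ b.1 = n.-1 :> nat \/ c.1 = n.-1 :> nat)) \/
  ((a.2 = 0 :> nat \/ b.2 = 0 :> nat \/ c.2 = 0 :> nat) /\
   (a.2 = m.-1 :> nat \/ b.2 = m.-1 :> nat \/ c.2 = m.-1 :> nat)) ->
  cond_ii [set a; b; c].
Proof.
move=> Hn Hm H.
have ma := in3a a b c; have mb := in3b a b c; have mc := in3c a b c.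
case: H => [[[A|[A|A]] [B|[B|B]]]|[[A|[A|A]] [B|[B|B]]]];
first [ exact: (mk_ii Hn Hm ma ma (or_introl (conj A B)))
      | exact: (mk_ii Hn Hm ma mb (or_introl (conj A B)))
      | exact: (mk_ii Hn Hm ma mc (or_introl (conj A B)))
      | exact: (mk_ii Hn Hm mb ma (or_introl (conj A B)))
      | exact: (mk_ii Hn Hm mb mb (or_introl (conj A B)))
      | exact: (mk_ii Hn Hm mb mc (or_introl (conj A B)))
      | exact: (mk_ii Hn Hm mc ma (or_introl (conj A B)))
      | exact: (mk_ii Hn Hm mc mb (or_introl (conj A B)))
      | exact: (mk_ii Hn Hm mc mc (or_introl (conj A B)))
      | exact: (mk_ii Hn Hm ma ma (or_intror (conj A B)))
      | exact: (mk_ii Hn Hm ma mb (or_intror (conj A B)))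
      | exact: (mk_ii Hn Hm ma mc (or_intror (conj A B)))
      | exact: (mk_ii Hn Hm mb ma (or_intror (conj A B)))
      | exact: (mk_ii Hn Hm mb mb (or_intror (conj A B)))
      | exact: (mk_ii Hn Hm mb mc (or_intror (conj A B)))
      | exact: (mk_ii Hn Hm mc ma (or_intror (conj A B)))
      | exact: (mk_ii Hn Hm mc mb (or_intror (conj A B)))
      | exact: (mk_ii Hn Hm mc mc (or_intror (conj A B))) ].
Qed.

Lemma pair_eta n m (a : vertex n m) : (a.1, a.2) = a.
Proof. by case: a. Qed.

Lemma fwd_sorted n m (a b c : vertex n m) : 3 <= n -> 3 <= m ->
  a.1 <= b.1 <= c.1 -> #|[set a; b; c]| = 3 -> cond_i [set a; b; c] ->
  resolving [set a; b; c] -> cond_ii [set a; b; c] /\ cond_iii [set a; b; c].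
Proof.
move=> Hn Hm srt H3 Ci Hr.
have [ab ac bc] := card3_neq H3.
have ma := in3a a b c; have mb := in3b a b c; have mc := in3c a b c.
have nc : forall x y, x \in [set a; b; c] -> y \in [set a; b; c] -> x != y ->
    ~ (corner' n m x.1 x.2 /\ corner' n m y.1 y.2).
  move=> x y xM yM xy [cx cy]; apply: (cards_ge2 xM yM xy _ _ Ci).
  - exact/corner_iff.
  - exact/corner_iff.
have ND : forall s r, s.+1 < n -> r.+1 < m ->
    ~ (agD s r a.1 a.2 /\ agD s r b.1 b.2 /\ agD s r c.1 c.2).
  move=> s r hs hr [A [B C]]; apply: (res_agD Hr hs hr) => w /in3 [->|->|->] //.
have NE : forall s r, s.+1 < n -> r.+1 < m ->
    ~ (agE s r a.1 a.2 /\ agE s r b.1 b.2 /\ agE s r c.1 c.2).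
  move=> s r hs hr [A [B C]]; apply: (res_agE Hr hs hr) => w /in3 [->|->|->] //.
have CX : forall t, 0 < t -> t.+1 < n -> ~ (a.1 = t :> nat /\ b.1 = t :> nat /\ c.1 = t :> nat).
  move=> t h0 ht [A [B C]]; apply: (res_CX Hm Hr h0 ht) => w /in3 [->|->|->] //.
have CY : forall t, 0 < t -> t.+1 < m -> ~ (a.2 = t :> nat /\ b.2 = t :> nat /\ c.2 = t :> nat).
  move=> t h0 ht [A [B C]]; apply: (res_CY Hn Hr h0 ht) => w /in3 [->|->|->] //.
have ii := @core_ii n m _ _ _ _ _ _ Hn Hm (ltn_ord a.1) (ltn_ord a.2) (ltn_ord b.1)
   (ltn_ord b.2) (ltn_ord c.1) (ltn_ord c.2) ND NE.
split; first exact: ii_set3.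
have := @core_sorted n m _ _ _ _ _ _ Hn Hm (ltn_ord a.1) (ltn_ord a.2) (ltn_ord b.1)
   (ltn_ord b.2) (ltn_ord c.1) (ltn_ord c.2) srt (vpair_neq ab) (vpair_neq ac) (vpair_neq bc)
   (nc _ _ ma mb ab) (nc _ _ ma mc ac) (nc _ _ mb mc bc) ND NE CX CY ii.
case: a b c {ma mb mc nc ND NE CX CY ii ab ac bc H3 Ci Hr} srt
  => [a1 a2] [b1 b2] [c1 c2] /= /andP[s1 s2].
case=> [[e13 [l13 n12]] | [[e12 [l23 Hy]] | [e23 [l12 Hy]]]].
- have E : c2 = a2 by apply: val_inj.
  left; exists a1, c1, b1, a2, b2; split.
  + by apply: ord_neq; lia.
  + by rewrite E; apply/setP => w; rewrite !inE; case: (w == _); case: (w == _); case: (w == _).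
  + by rewrite s1 s2.
  + by apply: ord_neq; lia.
- have E : b1 = a1 by apply: val_inj.
  right; case: Hy => [[l Hy]|[l Hy]].
  + exists a1, c1, a2, b2, c2; split.
    * by apply: ord_neq; lia.
    * by rewrite E.
    * exact: Hy.
    * by apply: ord_neq; lia.
  + exists a1, c1, b2, a2, c2; split.
    * by apply: ord_neq; lia.
    * by rewrite E; apply/setP => w; rewrite !inE; case: (w == _); case: (w == _); case: (w == _).
    * exact: Hy.
    * by apply: ord_neq; lia.
- have E : c1 = b1 by apply: val_inj.
  right; case: Hy => [[l Hy]|[l Hy]].
  + exists b1, a1, b2, c2, a2; split.
    * by apply: ord_neq; lia.
    * by rewrite E; apply/setP => w; rewrite !inE; case: (w == _); case: (w == _); case: (w == _).
    * exact: Hy.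
    * by apply: ord_neq; lia.
  + exists b1, a1, c2, b2, a2; split.
    * by apply: ord_neq; lia.
    * by rewrite E; apply/setP => w; rewrite !inE; case: (w == _); case: (w == _); case: (w == _).
    * exact: Hy.
    * by apply: ord_neq; lia.
Qed.


Lemma dec4 (a1 b1 a2 b2 : nat) : (a1 = b1 \/ a2 = b2) \/ (a1 <> b1 /\ a2 <> b2).
Proof. lia. Qed.

Theorem theorem2 (n m : nat) (Hn : 3 <= n) (Hm : 3 <= m)
  (M : {set vertex n m}) (HM : #|M| = 3) :
  k_minimal 3 M <-> (cond_i M /\ cond_ii M /\ cond_iii M).
Proof.
split.
- case=> [[Hres Hmin] _].
  have Ci : cond_i M.
    rewrite /cond_i leqNgt; apply/negP => /card_gt1P [x [y [hx hy xy]]].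
    move: hx hy; rewrite !in_set => /andP[xM cx] /andP[yM cy].
    have [z [zM sub]] := third_in HM xM yM xy.
    have cx' := (@corner_iff n m x Hn Hm).1 cx.
    have cy' := (@corner_iff n m y Hn Hm).1 cy.
    have nxy := vpair_neq xy.
    have [side|[n1 n2]] : (x.1 = y.1 :> nat \/ x.2 = y.2 :> nat) \/
                         (x.1 <> y.1 :> nat /\ x.2 <> y.2 :> nat).
      exact: dec4.
    + apply: (Hmin z zM); apply: resolving_mono sub _.
      exact: corner_pair_res.
    + apply: (Hmin y yM); apply: (dup_res xM xy _ Hres).
      by move=> u; apply: diag_sum.
  split => //.
  have [a [b [c [ab ac bc EM]]]] := card3E HM.
  subst M.
  suff W : forall a' b' c', [set a; b; c] = [set a'; b'; c'] -> a'.1 <= b'.1 <= c'.1 ->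
      cond_ii [set a; b; c] /\ cond_iii [set a; b; c].
    case: (leqP a.1 b.1) => hab; case: (leqP b.1 c.1) => hbc; case: (leqP a.1 c.1) => hac.
    + by apply: (W a b c) => //; rewrite hab hbc.
    + by have := leq_ltn_trans (leq_trans hab hbc) hac; rewrite ltnn.
    + apply: (W a c b); last by rewrite hac ltnW.
      by apply/setP => w; rewrite !inE; case: (w == _); case: (w == _); case: (w == _).
    + apply: (W c a b); last by rewrite hab ltnW.
      by apply/setP => w; rewrite !inE; case: (w == _); case: (w == _); case: (w == _).
    + apply: (W b a c); last by rewrite hac ltnW.
      by apply/setP => w; rewrite !inE; case: (w == _); case: (w == _); case: (w == _).
    + apply: (W b c a); last by rewrite hbc ltnW.
      by apply/setP => w; rewrite !inE; case: (w == _); case: (w == _); case: (w == _).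
    + by have := leq_ltn_trans hac (ltn_trans hbc hab); rewrite ltnn.
    + apply: (W c b a); last by rewrite (ltnW hbc) (ltnW hab).
      by apply/setP => w; rewrite !inE; case: (w == _); case: (w == _); case: (w == _).
  move=> a' b' c' E srt; rewrite E in HM Ci Hres *.
  exact: fwd_sorted.
- case=> [Ci [Cii Ciii]]; split => //; split.
  + exact: iii_res.
  + move=> v vM Hr.
    have [x [y [xy xM yM E]]] := pair_in HM vM.
    rewrite E in Hr.
    have [cx cy] := pair_res_corner Hn Hm xy Hr.
    exact: (cards_ge2 xM yM xy cx cy Ci).
Qed.
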